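(* Let $\mu\in\Delta([N])$, let $(U,\pi)\sim\mathrm{Unif}([0,1])\times\mathrm{Unif}(\Pi)$, and let $Y = \Gamma((U,\pi),\mu)$. Then almost surely $$\frac{1}{C_0}\,\mathrm{Cov}\big(U,\eta(\pi(Y))\mid Y\big) = 1-\mu(Y).$$
   Context: $\Pi$ is the set of permutations of $[N]$ and $\mathrm{Unif}(\Pi)$ the uniform distribution on it (independent of $U$). Decoder: $\Gamma((u,\pi),\mu):=\pi^{-1}(\min\{\pi(i):\mu(\{j:\pi(j)\le\pi(i)\})\ge u\})$. $\eta(i):=(i-1)/(N-1)$ and $C_0:=\mathrm{Var}(\eta(I))$ for $I$ uniform on $[N]$. *)

(* Defs.v *)
From HB Require Import structures.
From mathcomp Require Import all_boot all_order all_algebra all_fingroup.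
From mathcomp Require Import all_classical all_reals all_analysis.
Set Implicit Arguments. Unset Strict Implicit. Unset Printing Implicit Defensive.
Import Order.TTheory GRing.Theory Num.Theory.
Local Open Scope ring_scope.
Local Open Scope classical_set_scope.

Section Defs.
Variables (R : realType) (N : nat).

(* [N] is represented by 'I_N = {0,..,N-1}; permutations are {perm 'I_N}. *)

Definition cumul (mu : 'I_N -> R) (pi : {perm 'I_N}) (i : 'I_N) : R :=
  \sum_(j | (pi j <= pi i)%N) mu j.

(* Gamma((u,pi),mu) = pi^{-1}(min{pi(i) : mu({j : pi j <= pi i}) >= u});
   None if the set is empty (a null event). *)
Definition Gamma (mu : 'I_N -> R) (u : R) (pi : {perm 'I_N}) : option 'I_N :=
  [pick i | (u <= cumul mu pi i) &&
            [forall j, (u <= cumul mu pi j) ==> (pi i <= pi j)%N]].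

(* eta on 0-based indices: eta(k) = k/(N-1)  (= paper's (i-1)/(N-1), i = k+1) *)
Definition eta (k : 'I_N) : R := (k : nat)%:R / (N.-1)%:R.

Definition C0 : R :=
  (N%:R)^-1 * (\sum_(k : 'I_N) eta k ^+ 2) - ((N%:R)^-1 * \sum_(k : 'I_N) eta k) ^+ 2.

(* Expectation of g(U,pi) for (U,pi) ~ Unif[0,1] x Unif(Pi) *)
Definition Exp (g : R -> {perm 'I_N} -> R) : R :=
  (#|{perm 'I_N}|%:R)^-1 *
  \sum_(pi : {perm 'I_N})
     Rintegral (@lebesgue_measure R) `[0%R, 1%R] (fun u => g u pi).

Definition indY (mu : 'I_N -> R) (y : 'I_N) (u : R) (pi : {perm 'I_N}) : R :=
  if Gamma mu u pi == Some y then 1 else 0.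

Definition ProbY (mu : 'I_N -> R) (y : 'I_N) : R := Exp (indY mu y).

Definition CondExp (mu : 'I_N -> R) (y : 'I_N) (g : R -> {perm 'I_N} -> R) : R :=
  Exp (fun u pi => g u pi * indY mu y u pi) / ProbY mu y.

Definition CondCov (mu : 'I_N -> R) (y : 'I_N) : R :=
  CondExp mu y (fun u pi => u * eta (pi y))
  - CondExp mu y (fun u _ => u) * CondExp mu y (fun _ pi => eta (pi y)).

End Defs.

(* Main.v *)
Require Import Defs.
From HB Require Import structures.
From mathcomp Require Import all_boot all_order all_algebra all_fingroup.
From mathcomp Require Import all_classical all_reals all_analysis.
From mathcomp Require Import ring lra.
Import Order.TTheory GRing.Theory Num.Theory.
Import numFieldNormedType.Exports.
Local Open Scope ring_scope.
Local Open Scope classical_set_scope.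

Lemma int_lin (R : realType) (a b al be : R) : a <= b ->
  Rintegral (@lebesgue_measure R) `[a, b] (fun u => al * u + be) =
  al * (b ^+ 2 - a ^+ 2) / 2 + be * (b - a).
Proof.
rewrite le_eqVlt => /predU1P[<-|ab].
  by rewrite set_itv1 Rintegral_set1 !subrr mulr0 mul0r mulr0 addr0.
pose F := fun u : R => al * (u ^+ 2 / 2) + be * u.
have dF : forall x : R, is_derive x (1:R) F (al * x + be).
  move=> x; rewrite /F.
  apply: is_derive_eq.
  rewrite !scaler0 add0r.
  rewrite /GRing.scale /= !mulr1. by field.
have cF : continuous F.
  move=> x; apply: differentiable_continuous.
  by apply/derivable1_diffP; exact: ex_derive.
rewrite /Rintegral (@continuous_FTC2 _ _ F) //=.
- rewrite /F. by field.
- apply: continuous_in_subspaceT => x _.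
  have dG : forall x : R, is_derive x (1:R) (fun u : R => al * u + be) al.
    move=> y; apply: is_derive_eq. by rewrite /GRing.scale /= !mulr1 addr0.
  apply: differentiable_continuous.
  by apply/derivable1_diffP; exact: ex_derive.
- split.
  + by move=> x _; exact: ex_derive.
  + by apply: cvg_at_right_filter; exact: cF.
  + by apply: cvg_at_left_filter; exact: cF.
- by move=> x _; rewrite derive1E derive_val.
Qed.

Section C.
Variables (R : realType) (N : nat).
Implicit Types (pi : {perm 'I_N}) (f : 'I_N -> R).

Lemma P1 f (y y' : 'I_N) : \sum_(pi : {perm 'I_N}) f (pi y) = \sum_(pi : {perm 'I_N}) f (pi y').
Proof.
rewrite (reindex_inj (mulgI (tperm y y'))) /=.
by apply: eq_bigr => pi _; rewrite permM tpermL.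
Qed.

Lemma P2 f (y : 'I_N) :
  N%:R * \sum_(pi : {perm 'I_N}) f (pi y) = (#|{perm 'I_N}|)%:R * \sum_k f k.
Proof.
have -> : N%:R * \sum_(pi : {perm 'I_N}) f (pi y) = \sum_(y' : 'I_N) \sum_(pi : {perm 'I_N}) f (pi y').
  rewrite [RHS](eq_bigr (fun _ => \sum_(pi : {perm 'I_N}) f (pi y))); last by move=> y' _; rewrite (P1 f y y').
  by rewrite sumr_const card_ord mulr_natl.
rewrite exchange_big /=.
rewrite (eq_bigr (fun _ => \sum_k f k)); last first.
  by move=> pi _; rewrite [RHS](reindex_inj (@perm_inj _ pi)).
by rewrite sumr_const mulr_natl.
Qed.

Lemma P3 f (y j j' : 'I_N) : j != y -> j' != y ->
  \sum_(pi : {perm 'I_N}) (if (pi j < pi y)%N then f (pi y) else 0) =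
  \sum_(pi : {perm 'I_N}) (if (pi j' < pi y)%N then f (pi y) else 0).
Proof.
move=> hj hj'.
rewrite (reindex_inj (mulgI (tperm j j'))) /=.
by apply: eq_bigr => pi _; rewrite !permM tpermL (tpermD hj hj').
Qed.

Lemma count_lt (p : nat) : (p <= N)%N ->
  \sum_(k < N) (if (k < p)%N then 1 else 0 : R) = p%:R.
Proof.
move=> hp.
rewrite -(big_mkord xpredT (fun k => if (k < p)%N then 1 else 0 : R)).
rewrite (big_cat_nat (leq0n p) hp) /=.
have h2 : \sum_(p <= i < N) (if (i < p)%N then 1 else 0 : R) = 0.
  rewrite big_nat_cond big1 // => k /andP[/andP[h1 _] _]; by rewrite ltnNge h1.
have h1 : \sum_(0 <= i < p) (if (i < p)%N then 1 else 0 : R) = p%:R.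
  rewrite big_nat_cond (eq_bigr (fun _ => 1)).
    by rewrite -big_nat_cond sumr_const_nat subn0.
  by move=> k /andP[/andP[_ ->] _].
by rewrite h1 h2 addr0.
Qed.

Lemma P4 pi (y : 'I_N) :
  \sum_(j | j != y) (if (pi j < pi y)%N then 1 else 0 : R) = (pi y : nat)%:R.
Proof.
have -> : \sum_(j | j != y) (if (pi j < pi y)%N then 1 else 0 : R) =
    \sum_j (if (pi j < pi y)%N then 1 else 0 : R).
  by rewrite [RHS](bigD1 y) //= ltnn add0r.
rewrite -(@count_lt (pi y) (ltnW (ltn_ord (pi y)))).
by rewrite (reindex_inj (@perm_inj _ pi^-1)) /=; apply: eq_bigr => k _; rewrite permKV.
Qed.


Lemma C0_gt0 (hN : (2 <= N)%N) : 0 < C0 R N.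
Proof.
set a := Defs.eta R (N:=N).
set A1 := \sum_(k : 'I_N) a k; set A2 := \sum_(k : 'I_N) a k ^+ 2.
have hN0 : N%:R != 0 :> R by rewrite pnatr_eq0 -lt0n (leq_trans _ hN).
have hN1 : (N.-1)%:R != 0 :> R by rewrite pnatr_eq0 -lt0n -ltnS prednK ?(ltnW hN) // (leq_trans _ hN).
have hV : \sum_(i : 'I_N) \sum_(j : 'I_N) (a i - a j) ^+ 2 = 2 * (N%:R * A2 - A1 ^+ 2).
  rewrite (eq_bigr (fun i => N%:R * a i ^+ 2 + A2 - 2 * (a i * A1))); last first.
    move=> i _.
    rewrite (eq_bigr (fun j => (a i ^+ 2 + a j ^+ 2) - 2 * (a i * a j))); last by move=> j _; ring.
    rewrite sumrB big_split /= sumr_const card_ord -!mulr_sumr.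
    by rewrite [N%:R * _]mulr_natl.
  rewrite sumrB big_split /= sumr_const card_ord -!mulr_sumr -mulr_suml.
  rewrite -[A2 *+ N]mulr_natl -/A1 -/A2; ring.
have hpos : 0 < \sum_(i : 'I_N) \sum_(j : 'I_N) (a i - a j) ^+ 2.
  have h0 : (0 < N)%N by rewrite (leq_trans _ hN).
  have h1 : (N.-1 < N)%N by rewrite prednK.
  pose i0 := Ordinal h0; pose j0 := Ordinal h1.
  have ai0 : a i0 = 0 by rewrite /a /Defs.eta /= mul0r.
  have aj0 : a j0 = 1 by rewrite /a /Defs.eta /= divff.
  apply: (@lt_le_trans _ _ ((a i0 - a j0) ^+ 2)); first by rewrite ai0 aj0 sub0r sqrrN expr1n ltr01.
  rewrite (bigD1 i0) //= (bigD1 j0) //= -addrA lerDl.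
  apply: addr_ge0; first by apply: sumr_ge0 => j _; exact: sqr_ge0.
  by apply: sumr_ge0 => i _; apply: sumr_ge0 => j _; exact: sqr_ge0.
have -> : C0 R N = (\sum_(i : 'I_N) \sum_(j : 'I_N) (a i - a j) ^+ 2) / (2 * N%:R ^+ 2).
  rewrite hV /C0 -/a -/A1 -/A2. field. by rewrite hN0.
by rewrite divr_gt0 // mulr_gt0 // exprn_gt0 // ltr0n (leq_trans _ hN).
Qed.

End C.

Section G.
Variables (R : realType) (N : nat) (mu : 'I_N -> R) (hmu0 : forall i, 0 <= mu i).

Definition Sb (pi : {perm 'I_N}) (y : 'I_N) : R := \sum_(j | (pi j < pi y)%N) mu j.

Lemma cumul_y (pi : {perm 'I_N}) (y : 'I_N) : cumul mu pi y = Sb pi y + mu y.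
Proof.
rewrite /cumul (bigD1 y) //= addrC; congr (_ + _).
apply: eq_bigl => j; rewrite ltn_neqAle andbC; congr (_ && _).
by rewrite (inj_eq val_inj) (inj_eq perm_inj).
Qed.

Lemma cumul_le (pi : {perm 'I_N}) (y j : 'I_N) : (pi j < pi y)%N -> cumul mu pi j <= Sb pi y.
Proof.
move=> hj; rewrite /cumul /Sb [X in _ <= X]big_mkcond [X in X <= _]big_mkcond.
apply: ler_sum => k _; case: ifP => h1; case: ifP => h2 //.
by move: h2; rewrite (leq_ltn_trans h1 hj).
Qed.

Lemma Sb_ge0 (pi : {perm 'I_N}) (y : 'I_N) : 0 <= Sb pi y.
Proof. by apply: sumr_ge0 => j _; exact: hmu0. Qed.

Lemma cumul_le1 (pi : {perm 'I_N}) (y : 'I_N) : \sum_i mu i = 1 -> cumul mu pi y <= 1.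
Proof.
move=> <-; rewrite /cumul [X in X <= _]big_mkcond.
by apply: ler_sum => k _; case: ifP => _ //; exact: hmu0.
Qed.

Lemma Sb0 (pi : {perm 'I_N}) (y : 'I_N) : (pi y == 0%N :> nat) -> Sb pi y = 0.
Proof. by move/eqP => h; rewrite /Sb big_pred0 // => j; rewrite h. Qed.

Lemma Gamma_eq (u : R) (pi : {perm 'I_N}) (y : 'I_N) : (Gamma mu u pi == Some y) =
  (u <= Sb pi y + mu y) && ((pi y == 0%N :> nat) || (Sb pi y < u)).
Proof.
set P := fun i => (u <= cumul mu pi i) &&
            [forall j, (u <= cumul mu pi j) ==> (pi i <= pi j)%N].
have -> : (Gamma mu u pi == Some y) = P y.
  rewrite /Gamma; case: pickP => [x Px|H]; last by apply/esym; exact: (H y).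
  have {}Px : P x by exact: Px.
  apply/idP/idP => [/eqP[<-]//|Py]; apply/eqP; congr Some.
  move: Px Py => /andP[ux /forallP Hx] /andP[uy /forallP Hy].
  apply: perm_inj; apply: val_inj; apply/eqP; rewrite eqn_leq.
  by apply/andP; split; [exact: (implyP (Hx y) uy) | exact: (implyP (Hy x) ux)].
rewrite /P cumul_y; apply/idP/idP.
- move=> /andP[uy /forallP H]; rewrite uy /=.
  case: (boolP (pi y == 0%N :> nat)) => //= hy0.
  rewrite ltNge; apply/negP => uS.
  have hlt : ((pi y).-1 < N)%N by rewrite (leq_ltn_trans (leq_pred _)).
  pose j0 := (pi^-1)%g (Ordinal hlt).
  have pj0 : (pi j0 : nat) = (pi y).-1 by rewrite /j0 permKV.
  have : (u <= cumul mu pi j0).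
    rewrite (le_trans uS) // /cumul /Sb le_eqVlt; apply/orP; left; apply/eqP.
    apply: eq_bigl => k; rewrite pj0.
    by case: (pi y : nat) hy0 => [|n] //= _; rewrite ltnS.
  move/(implyP (H j0)); rewrite pj0.
  by case: (pi y : nat) hy0 => [|n] //= _; rewrite ltnn.
- move=> /andP[uy hor]; rewrite uy /=; apply/forallP => j; apply/implyP => uj.
  rewrite leqNgt; apply/negP => hj.
  move: hor => /orP[/eqP h0|Su]; first by move: hj; rewrite h0.
  have hc := cumul_le _ _ _ hj.
  by move: (lt_le_trans Su (le_trans uj hc)); rewrite ltxx.
Qed.


Lemma int_pi (al be : R) (pi : {perm 'I_N}) (y : 'I_N) : \sum_i mu i = 1 ->
  Rintegral (@lebesgue_measure R) `[0, 1] (fun u => (al * u + be) * indY mu y u pi) =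
  al * ((Sb pi y + mu y) ^+ 2 - Sb pi y ^+ 2) / 2 + be * mu y.
Proof.
move=> hmu1.
have S0 := Sb_ge0 pi y.
have S1 : Sb pi y + mu y <= 1 by rewrite -cumul_y; exact: cumul_le1.
pose I : interval R := if (pi y == 0%N :> nat) then `[Sb pi y, Sb pi y + mu y]%R else `]Sb pi y, Sb pi y + mu y]%R.
have hI : {in `[0, 1], (fun u => (al * u + be) * indY mu y u pi) =1
    ((fun u => al * u + be) \_ [set` I])}.
  move=> u; rewrite inE /= in_itv /= => /andP[u0 u1].
  rewrite patchE /indY Gamma_eq /I.
  case: (boolP (pi y == 0%N :> nat)) => h0 /=.
    rewrite Sb0 // add0r mem_setE in_itv /= u0 andbT /=.
    by case: ifP; rewrite ?mulr1 ?mulr0.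
  rewrite mem_setE in_itv /= andbC.
  by case: ifP; rewrite ?mulr1 ?mulr0.
have -> : Rintegral (@lebesgue_measure R) `[0, 1] (fun u => (al * u + be) * indY mu y u pi) =
  Rintegral (@lebesgue_measure R) `[0, 1] ((fun u => al * u + be) \_ [set` I]) by exact: eq_Rintegral.
rewrite -Rintegral_mkcondr setIidr; last first.
  move=> x; rewrite /I; case: ifP => _ /=; rewrite !in_itv /= => /andP[h1 h2];
  rewrite (le_trans h2 S1) andbT.
  - exact: le_trans h1.
  - exact: (le_trans S0 (ltW h1)).
have -> : Rintegral (@lebesgue_measure R) [set` I] (fun u => al * u + be) =
    Rintegral (@lebesgue_measure R) `[Sb pi y, Sb pi y + mu y] (fun u => al * u + be).
  rewrite /I; case: ifP => _ //.
  apply: Rintegral_itv_obnd_cbnd.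
  have H : (@lebesgue_measure R).-integrable `[Sb pi y, Sb pi y + mu y] (EFin \o (fun x => al * x + be)).
    apply: continuous_compact_integrable; first exact: segment_compact.
    apply: continuous_in_subspaceT => x _.
    have dG : forall x : R, is_derive x (1:R) (fun u : R => al * u + be) al.
      move=> z; apply: is_derive_eq. by rewrite /GRing.scale /= !mulr1 addr0.
    apply: differentiable_continuous.
    by apply/derivable1_diffP; exact: ex_derive.
  apply: integrableS H => //.
  by move=> x; rewrite /= !in_itv /= => /andP[h1 h2]; rewrite h2 ltW.
apply: eq_trans; first by apply: int_lin; rewrite lerDl hmu0.
by congr (_ + _); rewrite addrAC subrr add0r.
Qed.

Lemma P5 (hN : (2 <= N)%N) (hmu1 : \sum_i mu i = 1) f (y : 'I_N) :
  \sum_(pi : {perm 'I_N}) Sb pi y * f (pi y) =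
  (1 - mu y) * \sum_(pi : {perm 'I_N}) Defs.eta R (pi y) * f (pi y).
Proof.
have hN1 : (N.-1)%:R != 0 :> R by rewrite pnatr_eq0 -lt0n -ltnS prednK ?(ltnW hN) // (leq_trans _ hN).
have A : forall j, j != y -> \sum_(pi : {perm 'I_N}) (if (pi j < pi y)%N then f (pi y) else 0) =
    \sum_(pi : {perm 'I_N}) Defs.eta R (pi y) * f (pi y).
  move=> j hj.
  have H : (N.-1)%:R * \sum_(pi : {perm 'I_N}) (if (pi j < pi y)%N then f (pi y) else 0) =
      \sum_(pi : {perm 'I_N}) (pi y : nat)%:R * f (pi y).
    have -> : (N.-1)%:R * \sum_(pi : {perm 'I_N}) (if (pi j < pi y)%N then f (pi y) else 0) =
        \sum_(j' | j' != y) \sum_(pi : {perm 'I_N}) (if (pi j' < pi y)%N then f (pi y) else 0).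
      rewrite [RHS](eq_bigr (fun _ => \sum_(pi : {perm 'I_N}) (if (pi j < pi y)%N then f (pi y) else 0))).
        by rewrite sumr_const cardC1 card_ord mulr_natl.
      by move=> j' hj'; rewrite (@P3 R N f y j' j hj' hj).
    rewrite exchange_big /=; apply: eq_bigr => pi _.
    rewrite -(P4 R N pi y) mulr_suml; apply: eq_bigr => j' _.
    by case: ifP; rewrite ?mul1r ?mul0r.
  apply: (mulfI hN1); rewrite H mulr_sumr; apply: eq_bigr => pi _.
  by rewrite /Defs.eta; field.
rewrite /Sb.
have -> : \sum_(pi : {perm 'I_N}) (\sum_(j | (pi j < pi y)%N) mu j) * f (pi y) =
    \sum_j mu j * \sum_(pi : {perm 'I_N}) (if (pi j < pi y)%N then f (pi y) else 0).
  under eq_bigr => pi _ do rewrite big_mkcond mulr_suml.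
  rewrite exchange_big; apply: eq_bigr => j _; rewrite mulr_sumr; apply: eq_bigr => pi _.
  by case: ifP; rewrite ?mulr0 ?mul0r.
rewrite (bigD1 y) //= big1 ?mulr0 ?add0r; last by move=> pi _; rewrite ltnn.
have -> : 1 - mu y = \sum_(j | j != y) mu j by rewrite -hmu1 (bigD1 y) //= addrAC subrr add0r.
rewrite mulr_suml; apply: eq_bigr => j hj; by rewrite A.
Qed.



Lemma Exp_lin (hmu1 : \sum_i mu i = 1) (y : 'I_N) (al be : {perm 'I_N} -> R)
  (g : R -> {perm 'I_N} -> R) :
  (forall u pi, g u pi = (al pi * u + be pi) * indY mu y u pi) ->
  Exp g = (#|{perm 'I_N}|%:R)^-1 *
    (mu y * \sum_(pi : {perm 'I_N}) al pi * Sb pi y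
     + mu y ^+ 2 / 2 * \sum_(pi : {perm 'I_N}) al pi
     + mu y * \sum_(pi : {perm 'I_N}) be pi).
Proof.
move=> hg; rewrite /Exp; congr (_ * _).
rewrite !mulr_sumr -!big_split /=; apply: eq_bigr => pi _.
have -> : Rintegral (@lebesgue_measure R) `[0, 1] (fun u => g u pi) =
  Rintegral (@lebesgue_measure R) `[0, 1] (fun u => (al pi * u + be pi) * indY mu y u pi).
  by apply: eq_Rintegral => u _; rewrite hg.
apply: eq_trans; first exact: int_pi. by field.
Qed.

Lemma main_sec (hN : (2 <= N)%N) (hmu1 : \sum_i mu i = 1) (y : 'I_N)
  (hy : 0 < ProbY mu y) : CondCov mu y / C0 R N = 1 - mu y.
Proof.
set K : R := #|{perm 'I_N}|%:R.
have hK : K != 0 by rewrite /K pnatr_eq0 -lt0n card_Sn fact_gt0.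
have hN0 : N%:R != 0 :> R by rewrite pnatr_eq0 -lt0n (leq_trans _ hN).
set A1 := \sum_(k : 'I_N) Defs.eta R k.
set A2 := \sum_(k : 'I_N) Defs.eta R k ^+ 2.
have S1 : \sum_(pi : {perm 'I_N}) (1 : R) = K by rewrite sumr_const.
have S0 : \sum_(pi : {perm 'I_N}) (0 : R) = 0 by rewrite big1.
have S0' : \sum_(pi : {perm 'I_N}) 0 * Sb pi y = 0 by rewrite big1 // => pi _; rewrite mul0r.
have F1 : \sum_(pi : {perm 'I_N}) Defs.eta R (pi y) = K / N%:R * A1.
  apply: (mulfI hN0); rewrite P2 -/K -/A1; field; exact: hN0.
have F2 : \sum_(pi : {perm 'I_N}) Defs.eta R (pi y) * Defs.eta R (pi y) = K / N%:R * A2.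
  apply: (mulfI hN0).
  rewrite (eq_bigr (fun pi : {perm 'I_N} => (fun k => Defs.eta R k ^+ 2) (pi y))); last by move=> pi _; rewrite expr2.
  rewrite (P2 R N (fun k => Defs.eta R k ^+ 2)) -/K -/A2; field; exact: hN0.
have F3 : \sum_(pi : {perm 'I_N}) Defs.eta R (pi y) * Sb pi y = (1 - mu y) * (K / N%:R * A2).
  rewrite (eq_bigr (fun pi : {perm 'I_N} => Sb pi y * Defs.eta R (pi y))); last by move=> pi _; rewrite mulrC.
  by rewrite (P5 hN hmu1) F2.
have F4 : \sum_(pi : {perm 'I_N}) 1 * Sb pi y = (1 - mu y) * (K / N%:R * A1).
  rewrite (eq_bigr (fun pi : {perm 'I_N} => Sb pi y * (fun _ => 1) (pi y))); last by move=> pi _; rewrite mulrC.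
  rewrite (P5 hN hmu1 (fun _ => 1)); congr (_ * _); rewrite -F1; apply: eq_bigr => pi _; by rewrite mulr1.
have hP : ProbY mu y = mu y.
  rewrite /ProbY (@Exp_lin hmu1 y (fun _ => 0) (fun _ => 1)); last by move=> u pi; rewrite mul0r add0r mul1r.
  rewrite S0' S0 S1; field; exact: hK.
have hm : mu y != 0 by rewrite -hP lt0r_neq0.
have E1 : CondExp mu y (fun u pi => u * Defs.eta R (pi y)) =
    ((K)^-1 * (mu y * ((1 - mu y) * (K / N%:R * A2)) + mu y ^+ 2 / 2 * (K / N%:R * A1) + mu y * 0)) / mu y.
  rewrite /CondExp hP (@Exp_lin hmu1 y (fun pi => Defs.eta R (pi y)) (fun _ => 0)); last first.
    by move=> u pi; rewrite addr0 [u * _]mulrC.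
  by rewrite F3 F1 S0.
have E2 : CondExp mu y (fun u _ => u) =
    ((K)^-1 * (mu y * ((1 - mu y) * (K / N%:R * A1)) + mu y ^+ 2 / 2 * K + mu y * 0)) / mu y.
  rewrite /CondExp hP (@Exp_lin hmu1 y (fun _ => 1) (fun _ => 0)); last first.
    by move=> u pi; rewrite addr0 mul1r.
  by rewrite F4 S1 S0.
have E3 : CondExp mu y (fun _ pi => Defs.eta R (pi y)) =
    ((K)^-1 * (mu y * 0 + mu y ^+ 2 / 2 * 0 + mu y * (K / N%:R * A1))) / mu y.
  rewrite /CondExp hP (@Exp_lin hmu1 y (fun _ => 0) (fun pi => Defs.eta R (pi y))); last first.
    by move=> u pi; rewrite mul0r add0r.
  by rewrite S0' S0 F1.
have -> : CondCov mu y = (1 - mu y) * C0 R N.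
  rewrite /CondCov E1 E2 E3 /C0 -/A1 -/A2; field.
  by rewrite hm hK hN0.
by rewrite mulfK // lt0r_neq0 // C0_gt0.
Qed.

End G.

Theorem lemma9 (R : realType) (N : nat) (hN : (2 <= N)%N)
  (mu : 'I_N -> R) (hmu0 : forall i, 0 <= mu i) (hmu1 : \sum_i mu i = 1)
  (y : 'I_N) (hy : 0 < ProbY mu y) :
  CondCov mu y / C0 R N = 1 - mu y.
Proof. exact: (@main_sec R N mu hmu0 hN hmu1 y hy). Qed.
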